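(* Let $M$ be an exact $\mathfrak{K}$-module. (a) If the $\mathfrak{S}$-module $(M_0,t_0)$ is cohomologically trivial, then $\operatorname{im}N(t_0)=\operatorname{im}\alpha_{01}=\ker\alpha_{20}=\ker(1-t_0)$ and $\operatorname{im}(1-t_0)=\operatorname{im}\alpha_{02}=\ker\alpha_{10}=\ker N(t_0)$. (b) If the $\mathfrak{S}$-module $(M_1,s_1)$ is cohomologically trivial, then $\operatorname{im}(1-s_1)=\operatorname{im}\alpha_{12}=\ker\alpha_{01}=\ker N(s_1)$ and $\operatorname{im}N(s_1)=\operatorname{im}\alpha_{10}=\ker\alpha_{21}=\ker(1-s_1)$. (c) If $\operatorname{im}(1-t_2)=\ker(1-s_2)$ and $\operatorname{im}(1-s_2)=\ker(1-t_2)$, then $\operatorname{im}(1-t_2)=\operatorname{im}\alpha_{20}=\ker\alpha_{12}=\ker(1-s_2)$ and $\operatorname{im}(1-s_2)=\operatorname{im}\alpha_{21}=\ker\alpha_{02}=\ker(1-t_2)$.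
   Context: Fix a prime $p$, $N(x)=1+x+\dots+x^{p-1}$, $\mathfrak{S}=\mathbb{Z}[t]/(t^p-1)$. A $\mathfrak{K}$-module $M$ amounts to $\mathbb{Z}/2$-graded abelian groups $M_0,M_1,M_2$ with homomorphisms $\alpha_{jk}\colon M_k\to M_j$ ($j\neq k$; $\alpha_{12},\alpha_{21}$ grading-reversing, others grading-preserving) with $\alpha_{jk}\alpha_{km}=0$ for $\{j,k,m\}=\{0,1,2\}$ and, for $t_0:=1-\alpha_{02}\alpha_{20}$ on $M_0$, $s_1:=1-\alpha_{12}\alpha_{21}$ on $M_1$, $t_2:=1-\alpha_{20}\alpha_{02}$, $s_2:=1-\alpha_{21}\alpha_{12}$ on $M_2$: $\alpha_{01}\alpha_{10}=N(t_0)$, $\alpha_{10}\alpha_{01}=N(s_1)$, $N(t_2)+N(s_2)=p$. $M$ is exact if the cyclic sequences $M_0\xrightarrow{\alpha_{10}}M_1\xrightarrow{\alpha_{21}}M_2\xrightarrow{\alpha_{02}}M_0$ and $M_0\xrightarrow{\alpha_{20}}M_2\xrightarrow{\alpha_{12}}M_1\xrightarrow{\alpha_{01}}M_0$ are exact. An $\mathfrak{S}$-module $(L,t)$ ($t^p=1$) is cohomologically trivial if $\ker(1-t)=\operatorname{im}N(t)$ and $\operatorname{im}(1-t)=\ker N(t)$. *)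

(* Defs.v *)
From HB Require Import structures.
From mathcomp Require Import all_boot all_algebra.
Set Implicit Arguments. Unset Strict Implicit. Unset Printing Implicit Defensive.
Import GRing.Theory.
Local Open Scope ring_scope.

Definition im (U V : Type) (f : U -> V) : V -> Prop := fun y => exists x, f x = y.
Definition ker (U : Type) (V : zmodType) (f : U -> V) : U -> Prop := fun x => f x = 0.
Definition seteq (T : Type) (A B : T -> Prop) : Prop := forall x, A x <-> B x.

Definition Nop (p : nat) (V : zmodType) (t : V -> V) (x : V) : V :=
  \sum_(i < p) iter i t x.
Definition omt (V : zmodType) (t : V -> V) (x : V) : V := x - t x.

Definition coh_trivial (p : nat) (V : zmodType) (t : V -> V) : Prop :=
  seteq (ker (omt t)) (im (Nop p t)) /\ seteq (im (omt t)) (ker (Nop p t)).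

(* A Z/2-graded abelian group is a zmodType M with an idempotent additive
   endomorphism e (projection onto the even part M^even = im e, with
   M^odd = ker e, M = M^even (+) M^odd). *)
Definition graded (M : zmodType) (e : {additive M -> M}) : Prop :=
  forall x, e (e x) = e x.
Definition grad_pres (U V : zmodType) (eU : {additive U -> U}) (eV : {additive V -> V})
  (f : {additive U -> V}) : Prop := forall x, f (eU x) = eV (f x).
Definition grad_rev (U V : zmodType) (eU : {additive U -> U}) (eV : {additive V -> V})
  (f : {additive U -> V}) : Prop := forall x, f (eU x) = f x - eV (f x).

Record Kdata := KData {
  M0 : zmodType; M1 : zmodType; M2 : zmodType;
  e0 : {additive M0 -> M0}; e1 : {additive M1 -> M1}; e2 : {additive M2 -> M2};
  a01 : {additive M1 -> M0}; a10 : {additive M0 -> M1};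
  a02 : {additive M2 -> M0}; a20 : {additive M0 -> M2};
  a12 : {additive M2 -> M1}; a21 : {additive M1 -> M2} }.

Definition t0 (M : Kdata) (x : M0 M) : M0 M := x - a02 M (a20 M x).
Definition s1 (M : Kdata) (x : M1 M) : M1 M := x - a12 M (a21 M x).
Definition t2 (M : Kdata) (x : M2 M) : M2 M := x - a20 M (a02 M x).
Definition s2 (M : Kdata) (x : M2 M) : M2 M := x - a21 M (a12 M x).

Definition is_Kmodule (p : nat) (M : Kdata) : Prop :=
  [/\ (graded (e0 M) /\ graded (e1 M) /\ graded (e2 M)),
      (grad_pres (e1 M) (e0 M) (a01 M) /\ grad_pres (e0 M) (e1 M) (a10 M) /\
       grad_pres (e2 M) (e0 M) (a02 M) /\ grad_pres (e0 M) (e2 M) (a20 M) /\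
       grad_rev (e2 M) (e1 M) (a12 M) /\ grad_rev (e1 M) (e2 M) (a21 M)),
      ((forall x, a01 M (a12 M x) = 0) /\ (forall x, a02 M (a21 M x) = 0) /\
       (forall x, a10 M (a02 M x) = 0) /\ (forall x, a12 M (a20 M x) = 0) /\
       (forall x, a20 M (a01 M x) = 0) /\ (forall x, a21 M (a10 M x) = 0)),
      ((forall x, a01 M (a10 M x) = Nop p (@t0 M) x) /\
       (forall x, a10 M (a01 M x) = Nop p (@s1 M) x))
    & (forall x, Nop p (@t2 M) x + Nop p (@s2 M) x = x *+ p)].

Definition exact_K (M : Kdata) : Prop :=
  [/\ seteq (im (a10 M)) (ker (a21 M)), seteq (im (a21 M)) (ker (a02 M))
    & seteq (im (a02 M)) (ker (a10 M))] /\
  [/\ seteq (im (a20 M)) (ker (a12 M)), seteq (im (a12 M)) (ker (a01 M))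
    & seteq (im (a01 M)) (ker (a20 M))].

(* Main.v *)
Require Import Defs.
From mathcomp Require Import all_boot all_algebra.

Import GRing.Theory.
Local Open Scope ring_scope.

Lemma chain4 (T : Type) (A B C D : T -> Prop) :
  (forall x, A x -> B x) -> seteq B C -> (forall x, C x -> D x) ->
  (forall x, D x -> A x) -> seteq A B /\ seteq B C /\ seteq C D.
Proof.
move=> AB BC CD DA; split; [|split] => // x; split.
- exact: AB.
- by move=> H; apply: DA; apply: CD; apply/BC.
- exact: CD.
- by move=> H; apply/BC; apply: AB; apply: DA.
Qed.

Lemma omtE (V : zmodType) (f : V -> V) x : omt (fun y => y - f y) x = f x.
Proof. by rewrite /omt subKr. Qed.

Theorem proposition7p3 (p : nat) (M : Kdata) :
  prime p -> is_Kmodule p M -> exact_K M ->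
  (* (a) *)
  (coh_trivial p (@t0 M) ->
     (seteq (im (Nop p (@t0 M))) (im (a01 M)) /\
      seteq (im (a01 M)) (ker (a20 M)) /\
      seteq (ker (a20 M)) (ker (omt (@t0 M)))) /\
     (seteq (im (omt (@t0 M))) (im (a02 M)) /\
      seteq (im (a02 M)) (ker (a10 M)) /\
      seteq (ker (a10 M)) (ker (Nop p (@t0 M))))) /\
  (* (b) *)
  (coh_trivial p (@s1 M) ->
     (seteq (im (omt (@s1 M))) (im (a12 M)) /\
      seteq (im (a12 M)) (ker (a01 M)) /\
      seteq (ker (a01 M)) (ker (Nop p (@s1 M)))) /\
     (seteq (im (Nop p (@s1 M))) (im (a10 M)) /\
      seteq (im (a10 M)) (ker (a21 M)) /\
      seteq (ker (a21 M)) (ker (omt (@s1 M))))) /\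
  (* (c) *)
  (seteq (im (omt (@t2 M))) (ker (omt (@s2 M))) ->
   seteq (im (omt (@s2 M))) (ker (omt (@t2 M))) ->
     (seteq (im (omt (@t2 M))) (im (a20 M)) /\
      seteq (im (a20 M)) (ker (a12 M)) /\
      seteq (ker (a12 M)) (ker (omt (@s2 M)))) /\
     (seteq (im (omt (@s2 M))) (im (a21 M)) /\
      seteq (im (a21 M)) (ker (a02 M)) /\
      seteq (ker (a02 M)) (ker (omt (@t2 M))))).
Proof.
move=> _ [_ _ [z1 [z2 [z3 [z4 [z5 z6]]]]] [N0 N1] _] [[e1 e2 e3] [e4 e5 e6]].
split; [|split].
- move=> [c1 c2]; split; apply: chain4.
  + by move=> y [x <-]; exists (a10 M x); rewrite N0.
  + exact: e6.
  + by move=> x H; rewrite /ker /t0 omtE /= H raddf0.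
  + by move=> x /c1.
  + by move=> y [x <-]; exists (a20 M x); rewrite /t0 omtE.
  + exact: e3.
  + by move=> x H; rewrite /ker -N0 H raddf0.
  + by move=> x /c2.
- move=> [c1 c2]; split; apply: chain4.
  + by move=> y [x <-]; exists (a21 M x); rewrite /s1 omtE.
  + exact: e5.
  + by move=> x H; rewrite /ker -N1 H raddf0.
  + by move=> x /c2.
  + by move=> y [x <-]; exists (a01 M x); rewrite N1.
  + exact: e1.
  + by move=> x H; rewrite /ker /s1 omtE /= H raddf0.
  + by move=> x /c1.
- move=> c1 c2; split; apply: chain4.
  + by move=> y [x <-]; exists (a02 M x); rewrite /t2 omtE.
  + exact: e4.
  + by move=> x H; rewrite /ker /s2 omtE /= H raddf0.
  + by move=> x /c1.
  + by move=> y [x <-]; exists (a12 M x); rewrite /s2 omtE.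
  + exact: e2.
  + by move=> x H; rewrite /ker /t2 omtE /= H raddf0.
  + by move=> x /c2.
Qed.
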